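(* Let $Y=(\ell_2,|||\cdot|||)$ be the renorming of $\ell_2$ described in the context. Then $e_1$ and $e_1+e_n$ ($n\ge2$) are extreme points of $B_Y$, and $e_1^*$ and $e_1^*-2e_n^*$ ($n\ge2$) are extreme points of $B_{Y^*}$.
   Context: Let $(e_n)$ be the unit vector basis of $\ell_2$ and $(e_n^* )$ the biorthogonal functionals (identified with elements of $\ell_2$ via the standard duality). Define an equivalent norm $\|\cdot\|$ on $\ell_2$ whose unit ball is the $\|\cdot\|_2$-closed convex hull of $B_{\ell_2}\cup\{\pm(e_1+e_n):n\ge2\}$. For $x=\sum_n x_ne_n$ put $|||x|||=\max\{\|x\|,\sup_{n\ge2}|x_1-2x_n|\}$ and $Y=(\ell_2,|||\cdot|||)$; $Y^*$ carries the dual norm. *)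

(* Defs.v *)
(* Sequences x : nat -> R over R : realType.
   Index convention: the paper's e_k (k >= 1) is [unitv (k-1)], i.e. e_1 = unitv 0,
   and the paper's "n >= 2" becomes "(1 <= n)%N". *)
From mathcomp Require Import all_boot all_order all_algebra.
From mathcomp Require Import all_classical all_reals all_analysis.
Import Order.TTheory GRing.Theory Num.Theory.
Import numFieldNormedType.Exports.
Local Open Scope ring_scope.
Local Open Scope classical_set_scope.

Definition l2 (R : realType) : set (nat -> R) :=
  [set x : nat -> R | cvgn (series (fun n => x n ^+ 2))].

Definition l2norm (R : realType) (x : nat -> R) : R :=
  Num.sqrt (limn (series (fun n => x n ^+ 2))).

Definition unitv (R : realType) (i : nat) : nat -> R := fun k => (k == i)%:R.

Definition l2ball (R : realType) : set (nat -> R) :=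
  [set x | l2 R x /\ l2norm R x <= 1].

Definition conv (R : realType) (S : set (nat -> R)) : set (nat -> R) :=
  [set x | exists (m : nat) (lam : 'I_m -> R) (v : 'I_m -> nat -> R),
     (forall i, 0 <= lam i) /\ \sum_(i < m) lam i = 1 /\ (forall i, S (v i)) /\
     x = (fun k => \sum_(i < m) lam i * v i k)].

Definition cconv (R : realType) (S : set (nat -> R)) : set (nat -> R) :=
  [set x | l2 R x /\ forall e : R, 0 < e ->
     exists y, conv R S y /\ l2norm R (fun k => x k - y k) < e].

(* unit ball of the equivalent norm ||.|| :
   closed convex hull of B_{ell_2} u {+-(e_1 + e_n) : n >= 2} *)
Definition K0 (R : realType) : set (nat -> R) :=
  cconv R (l2ball R `|`
    [set x | exists n : nat, (1 <= n)%N /\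
       (x = (fun k => unitv R 0 k + unitv R n k) \/
        x = (fun k => - (unitv R 0 k + unitv R n k)))]).

(* ||x|| = Minkowski functional of K0 *)
Definition norm0 (R : realType) (x : nat -> R) : R :=
  inf [set t : R | 0 < t /\ K0 R (fun k => t^-1 * x k)].

Definition tnorm (R : realType) (x : nat -> R) : R :=
  Num.max (norm0 R x)
    (sup [set `|x 0%N - 2 * x n| | n in [set n : nat | (1 <= n)%N]]).

Definition BY (R : realType) : set (nat -> R) :=
  [set x | l2 R x /\ tnorm R x <= 1].

Definition pairing (R : realType) (f x : nat -> R) : R :=
  limn (series (fun k => f k * x k)).

(* dual norm on Y^* (Y^* identified with ell_2 via the standard duality) *)
Definition dualnorm (R : realType) (f : nat -> R) : R :=
  sup [set `|pairing R f x| | x in BY R].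

Definition BYs (R : realType) : set (nat -> R) :=
  [set f | l2 R f /\ dualnorm R f <= 1].

Definition extreme (R : realType) (C : set (nat -> R)) (x : nat -> R) : Prop :=
  C x /\ forall (y z : nat -> R) (t : R), C y -> C z -> 0 < t < 1 ->
    x = (fun k => t * y k + (1 - t) * z k) -> y = z.

(* Main.v *)
Require Import Defs.
From mathcomp Require Import all_boot all_order all_algebra.
From mathcomp Require Import all_classical all_reals all_analysis.
From mathcomp Require Import ring lra.
Import Order.TTheory GRing.Theory Num.Theory.
Local Open Scope ring_scope.

Module Aux.
Import numFieldNormedType.Exports.
Local Open Scope ring_scope.
Local Open Scope classical_set_scope.
Section S.
Variable R : realType.
Implicit Types u v : nat -> R.

Lemma series_ge0 u N : (forall k, 0 <= u k) -> 0 <= series u N.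
Proof. by move=> h; rewrite /series /=; apply: sumr_ge0 => k _. Qed.

Lemma bseries u M : (forall k, 0 <= u k) -> (forall N, series u N <= M) ->
  cvgn (series u) /\ limn (series u) <= M /\ (forall N, series u N <= limn (series u)).
Proof.
move=> h0 hM.
have hom : {homo series u : n m / (n <= m)%N >-> n <= m}.
  by apply: nondecreasing_series => n _ _; exact: h0.
have cv : cvgn (series u).
  apply: nondecreasing_is_cvgn => //; exists M => _ [n _ <-]; exact: hM.
split => //; split; last exact: nondecreasing_cvgn_le.
apply: limr_le => //; near=> n; exact: hM.
Unshelve. all: by end_near.
Qed.

Lemma fin_series u K : (forall k, (K <= k)%N -> u k = 0) ->
  cvgn (series u) /\ limn (series u) = series u K.
Proof.
move=> h.
have e : \forall N \near \oo, series u N = series u K.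
  exists K => // N /= hN.
  rewrite /series /= (big_cat_nat (leq0n K) hN) /=.
  rewrite [X in _ + X]big_nat_cond [X in _ + X]big1 ?addr0 //.
  by move=> k /andP[/andP[hk _] _]; exact: h.
split; [exact: is_cvg_near_cst e | exact: lim_near_cst e].
Qed.

Lemma sum_delta (g : nat -> R) i N :
  \sum_(0 <= k < N) g k * (k == i)%:R = (i < N)%:R * g i.
Proof.
elim: N => [|N IH]; first by rewrite big_geq // mul0r.
rewrite big_nat_recr //= IH ltnS.
case: (eqVneq N i) => [->|ne].
  by rewrite ltnn leqnn /= mul0r add0r mulr1 mul1r.
by rewrite [(i <= N)%N]leq_eqVlt eq_sym (negbTE ne) /= mulr0 addr0.
Qed.


Local Notation P u := (series (fun n => u n ^+ 2)).

Lemma le_lim_series u : (forall k, 0 <= u k) -> cvgn (series u) ->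
  forall N, series u N <= limn (series u).
Proof.
move=> h0 cv; apply: nondecreasing_cvgn_le => //.
by apply: nondecreasing_series => n _ _; exact: h0.
Qed.

Lemma bool_le1 (b : bool) : (b%:R : R) <= 1.
Proof. by case: b => /=; [rewrite lexx | rewrite ler01]. Qed.

Lemma sqD_le (a b : R) : (a + b) ^+ 2 <= 2 * a ^+ 2 + 2 * b ^+ 2.
Proof.
rewrite -subr_ge0 (_ : _ - _ = (a - b) ^+ 2); first exact: sqr_ge0.
by ring.
Qed.
Lemma sqB_le (a b : R) : (a - b) ^+ 2 <= 2 * a ^+ 2 + 2 * b ^+ 2.
Proof.
rewrite -subr_ge0 (_ : _ - _ = (a + b) ^+ 2); first exact: sqr_ge0.
by ring.
Qed.

Lemma P_le2 u v w N : (forall k, w k ^+ 2 <= 2 * u k ^+ 2 + 2 * v k ^+ 2) ->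
  P w N <= 2 * P u N + 2 * P v N.
Proof.
move=> h; rewrite /series /= !mulr_sumr -big_split /=.
by apply: ler_sum => k _; exact: h.
Qed.

Lemma P_scale (c : R) u N : series (fun k => (c * u k) ^+ 2) N = c ^+ 2 * P u N.
Proof. by rewrite /series /= mulr_sumr; apply: eq_bigr => k _; rewrite exprMn. Qed.

Lemma jensen m (lam a : 'I_m -> R) : (forall i, 0 <= lam i) -> \sum_i lam i = 1 ->
  (\sum_i lam i * a i) ^+ 2 <= \sum_i lam i * a i ^+ 2.
Proof.
move=> h0 h1; set c := \sum_i lam i * a i.
have : 0 <= \sum_i lam i * (a i - c) ^+ 2.
  by apply: sumr_ge0 => i _; apply: mulr_ge0 => //; exact: sqr_ge0.
rewrite (eq_bigr (fun i => lam i * a i ^+ 2 - (2 * c) * (lam i * a i) + c ^+ 2 * lam i));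
  last by move=> i _; ring.
rewrite big_split big_split /= sumrN -!mulr_sumr -/c h1.
nra.
Qed.

Lemma conv_bound (S' : set (nat -> R)) y :
  (forall v, S' v -> forall N, P v N <= 2) -> Defs.conv R S' y -> forall N, P y N <= 2.
Proof.
move=> hS [m [lam [v [h0 [h1 [hv ->]]]]]] N.
apply: (@le_trans _ _ (\sum_(0 <= k < N) \sum_(i < m) lam i * v i k ^+ 2)).
  rewrite /series /=; apply: ler_sum => k _; exact: jensen.
rewrite exchange_big /=.
apply: (@le_trans _ _ (\sum_(i < m) lam i * 2)); last by rewrite -mulr_suml h1 mul1r.
apply: ler_sum => i _; rewrite -mulr_sumr; apply: ler_wpM2l => //.
by have := hS _ (hv i) N; rewrite /series.
Qed.

Definition Sset : set (nat -> R) := l2ball R `|`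
    [set x | exists n : nat, (1 <= n)%N /\
       (x = (fun k => unitv R 0 k + unitv R n k) \/
        x = (fun k => - (unitv R 0 k + unitv R n k)))].

Lemma K0E : K0 R = cconv R Sset.
Proof. by []. Qed.

Lemma sqrt_le1 (L : R) : Num.sqrt L <= 1 -> L <= 1.
Proof.
move=> h; rewrite leNgt; apply/negP => hL.
have : Num.sqrt 1 < Num.sqrt L by rewrite ltr_sqrt // (lt_trans ltr01 hL).
by rewrite sqrtr1 ltNge h.
Qed.

Lemma sqrt_lt1 (L : R) : Num.sqrt L < 1 -> L < 1.
Proof.
move=> h; rewrite ltNge; apply/negP => hL.
have : Num.sqrt 1 <= Num.sqrt L by rewrite ler_sqrt // (le_trans ler01 hL).
by rewrite sqrtr1 leNgt h.
Qed.

Lemma S_bound v : Sset v -> forall N, P v N <= 2.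
Proof.
case=> [[hl hn]|[n [hn hv]]] N.
  have h1 := le_lim_series _ (fun k => sqr_ge0 (v k)) hl N.
  have h2 := sqrt_le1 _ hn.
  by apply: (le_trans h1); apply: (le_trans h2); rewrite ler1n.
have hpt : forall k, v k ^+ 2 <= 1 * (k == 0)%:R + 1 * (k == n)%:R.
  move=> k; have -> : v k ^+ 2 = ((k == 0)%:R + (k == n)%:R) ^+ 2.
    by case: hv => ->; rewrite ?sqrrN.
  have : ~~ ((k == 0) && (k == n)).
    by apply/negP => /andP[/eqP -> /eqP h0]; move: hn; rewrite -h0.
  rewrite /unitv.
  by move: (k == 0) (k == n) => [] [] //= _; rewrite ?mul1r ?mul0r ?addr0 ?add0r ?expr1n ?expr0n //= ?lexx ?ler01.
apply: (@le_trans _ _ (\sum_(0 <= k < N) (1 * (k == 0)%:R + 1 * (k == n)%:R))).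
  by rewrite /series /=; apply: ler_sum => k _; exact: hpt.
rewrite big_split /= !(sum_delta (fun=> 1)) !mulr1.
have := bool_le1 (0 < N)%N; have := bool_le1 (n < N)%N; lra.
Qed.

Lemma S_in_K0 v : l2 R v -> Sset v -> K0 R v.
Proof.
move=> hl hS; split => // e he; exists v; split.
  exists 1%N, (fun=> 1), (fun=> v); split; first by move=> _; exact: ler01.
  split; first by rewrite big_ord1.
  split => //; apply/funext => k; by rewrite big_ord1 mul1r.
rewrite /l2norm (_ : (fun n => (v n - v n) ^+ 2) = fun=> 0); last first.
  by apply/funext => k; rewrite subrr expr0n.
rewrite (_ : series (fun=> 0) = fun=> 0); last first.
  by apply/funext => N; rewrite /series /= big1.
by rewrite lim_cst // sqrtr0.
Qed.

Lemma K0_bound w : K0 R w -> forall N, P w N <= 6.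
Proof.
move=> [hw hc] N.
have [y [hy hd]] := hc 1 ltr01.
have hyb := conv_bound Sset y S_bound hy.
have hwL := le_lim_series _ (fun k => sqr_ge0 (w k)) hw.
have hdb : forall N, P (fun k => w k - y k) N <= 2 * limn (P w) + 2 * 2.
  move=> M; have h := P_le2 w y (fun k => w k - y k) M (fun k => sqB_le (w k) (y k)).
  apply: (le_trans h).
  by apply: lerD; [rewrite ler_pM2l //; exact: hwL | rewrite ler_pM2l //; exact: hyb].
have [cvd [_ hdl]] := bseries _ _ (fun k => sqr_ge0 (w k - y k)) hdb.
have Ld1 := sqrt_lt1 _ hd.
have : P w N <= 2 * P (fun k => w k - y k) N + 2 * P y N.
  by apply: P_le2 => k; rewrite -{1}(subrK (y k) (w k)); exact: sqD_le.
have := hdl N; have := hyb N; lra.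
Qed.

Lemma BY_bound x : BY R x -> forall N, P x N <= 24.
Proof.
move=> [hx ht] N.
have hn0 : norm0 R x <= 1 by move: ht; rewrite /tnorm ge_max => /andP[].
have hxL := le_lim_series _ (fun k => sqr_ge0 (x k)) hx.
have L0 : 0 <= limn (P x) by apply: le_trans (hxL 0%N); apply: series_ge0 => k; exact: sqr_ge0.
set E := [set t : R | 0 < t /\ K0 R (fun k => t^-1 * x k)].
have En : E !=set0.
  set t0 := limn (P x) + 1.
  have t0p : 0 < t0 by rewrite /t0; lra.
  exists t0; split => //.
  have hb : forall M, series (fun k => (t0^-1 * x k) ^+ 2) M <= 1.
    move=> M; rewrite P_scale exprVn ler_pdivrMl ?exprn_gt0 // mulr1.
    have := hxL M; rewrite /t0; nra.
  have [cv [hle _]] := bseries _ _ (fun k => sqr_ge0 (t0^-1 * x k)) hb.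
  apply: S_in_K0 => //; left; split => //.
  by rewrite /l2norm -sqrtr1 ler_sqrt.
have : inf E < 2.
  apply: (@le_lt_trans _ _ 1); last by lra.
  exact: hn0.
case/(inf_lt En) => t [tp hK] t2.
have := K0_bound _ hK N; rewrite P_scale => h.
have -> : P x N = t ^+ 2 * (t^-1 ^+ 2 * P x N).
  by rewrite mulrA -exprMn mulfV ?gt_eqF // expr1n mul1r.
have := series_ge0 _ N (fun k => sqr_ge0 (x k)).
nra.
Qed.

Lemma normK2 (a : R) : `|a| ^+ 2 = a ^+ 2.
Proof. exact: real_normK (num_real a). Qed.

Lemma BY_coord x : BY R x ->
  (forall m, (1 <= m)%N -> `|x 0%N - 2 * x m| <= 1) /\ `|x 0%N| <= 1.
Proof.
move=> [hx ht].
set E := [set `|x 0%N - 2 * x n| | n in [set n : nat | (1 <= n)%N]].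
have hs : sup E <= 1 by move: ht; rewrite /tnorm ge_max => /andP[].
have hxL := le_lim_series _ (fun k => sqr_ge0 (x k)) hx.
have hpt : forall m, x m ^+ 2 <= limn (P x).
  move=> m; apply: le_trans (hxL m.+1).
  rewrite /series /= big_nat_recr //= lerDr.
  by apply: sumr_ge0 => k _; exact: sqr_ge0.
have hE : has_sup E.
  split; first by exists `|x 0%N - 2 * x 1%N|; exists 1%N.
  exists (`|x 0%N| + 2 * (1 + limn (P x))) => _ [n _ <-].
  apply: le_trans (ler_normB _ _) _; rewrite normrM ger0_norm // lerD2l ler_pM2l //.
  have := hpt n; rewrite -normK2; have := normr_ge0 (x n); nra.
have part1 : forall m, (1 <= m)%N -> `|x 0%N - 2 * x m| <= 1.
  by move=> m hm; apply: le_trans hs; apply: sup_upper_bound => //; exists m.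
split => //.
rewrite leNgt; apply/negP => h1.
set e := (`|x 0%N| - 1) / 2.
have ep : 0 < e by rewrite /e; lra.
have hc := cvg_series_cvg_0 hx.
have := cvgr0_norm_lt _ hc (e ^+ 2) (exprn_gt0 _ ep).
move=> [M _ hM].
have := hM M.+1 (leqnSn M); rewrite /= ger0_norm ?sqr_ge0 // -normK2 => hm.
have := part1 M.+1 (ltn0Sn M).
have : `|x 0%N| <= `|x 0%N - 2 * x M.+1| + `|2 * x M.+1|.
  by rewrite -{1}(subrK (2 * x M.+1) (x 0%N)); exact: ler_normD.
rewrite normrM (ger0_norm (_ : 0 <= 2)) //.
have := normr_ge0 (x M.+1); rewrite /e in ep hm *; nra.
Qed.

Lemma BY_mem v : l2 R v -> Sset v ->
  (forall n, (1 <= n)%N -> `|v 0%N - 2 * v n| <= 1) -> BY R v.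
Proof.
move=> hl hS hc; split => //; rewrite /tnorm ge_max; apply/andP; split.
  rewrite /norm0; apply: ge_inf.
    by exists 0 => t [tp _]; exact: ltW.
  split; first exact: ltr01.
  rewrite invr1 (_ : (fun k => 1 * v k) = v); last by apply/funext => k; rewrite mul1r.
  exact: S_in_K0.
apply: ge_sup; first by exists `|v 0%N - 2 * v 1%N|; exists 1%N.
by move=> _ [n hn <-]; exact: hc.
Qed.

Lemma pair_small g x : l2 R g -> BY R x -> `|pairing R g x| <= limn (P g) + 24.
Proof.
move=> hg hx.
have hgL := le_lim_series _ (fun k => sqr_ge0 (g k)) hg.
have hxb := BY_bound _ hx.
have ha : forall N, series (fun k => (g k + x k) ^+ 2) N <= 2 * limn (P g) + 2 * 24.
  move=> N; have h := P_le2 g x (fun k => g k + x k) N (fun k => sqD_le (g k) (x k)).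
  apply: (le_trans h).
  by apply: lerD; [rewrite ler_pM2l //; exact: hgL | rewrite ler_pM2l //; exact: hxb].
have hb : forall N, series (fun k => (g k - x k) ^+ 2) N <= 2 * limn (P g) + 2 * 24.
  move=> N; have h := P_le2 g x (fun k => g k - x k) N (fun k => sqB_le (g k) (x k)).
  apply: (le_trans h).
  by apply: lerD; [rewrite ler_pM2l //; exact: hgL | rewrite ler_pM2l //; exact: hxb].
have [cva [la la']] := bseries _ _ (fun k => sqr_ge0 (g k + x k)) ha.
have [cvb [lb lb']] := bseries _ _ (fun k => sqr_ge0 (g k - x k)) hb.
have la0 := le_trans (series_ge0 _ 0 (fun k => sqr_ge0 (g k + x k))) (la' 0%N).
have lb0 := le_trans (series_ge0 _ 0 (fun k => sqr_ge0 (g k - x k))) (lb' 0%N).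
have L0 := le_trans (series_ge0 _ 0 (fun k => sqr_ge0 (g k))) (hgL 0%N).
rewrite /pairing.
have -> : (fun k => g k * x k) =
   4^-1 *: ((fun k => (g k + x k) ^+ 2) - (fun k => (g k - x k) ^+ 2)).
  by apply/funext => k; rewrite !fctE; rewrite [RHS](_ : _ = 4^-1 * ((g k + x k) ^+ 2 - (g k - x k) ^+ 2)) //; field.
have cvd := is_cvg_seriesB cva cvb.
rewrite (lim_seriesZ _ cvd) (lim_seriesB cva cvb).
set A := limn _ in la la' la0 *; set B := limn _ in lb lb' lb0 *.
change (`|4^-1 * (A - B)| <= limn (P g) + 24).
rewrite normrM ger0_norm ?invr_ge0 //.
have := ler_normB A B; rewrite (ger0_norm la0) (ger0_norm lb0).
lra.
Qed.

Lemma pair_le1 g x : BYs R g -> BY R x -> `|pairing R g x| <= 1.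
Proof.
move=> [hg hd] hx; apply: le_trans hd; apply: sup_upper_bound; last by exists x.
split; first by exists `|pairing R g x|; exists x.
by exists (limn (P g) + 24) => _ [y hy <-]; exact: pair_small.
Qed.

Lemma pair_fin g v K : (forall k, (K <= k)%N -> g k * v k = 0) ->
  pairing R g v = \sum_(0 <= k < K) g k * v k.
Proof. by move=> h; rewrite /pairing (fin_series _ _ h).2. Qed.

Lemma l2_fin v K : (forall k, (K <= k)%N -> v k = 0) -> l2 R v.
Proof.
move=> h; have [] // := fin_series (fun n => v n ^+ 2) K.
by move=> k hk; rewrite (h k hk) expr0n.
Qed.

Lemma unitv_out {i k : nat} : (i < k)%N -> unitv R i k = 0.
Proof. by move=> h; rewrite /unitv; case: eqVneq h => // ->; rewrite ltnn. Qed.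

Lemma pair_e1 g : pairing R g (unitv R 0) = g 0%N.
Proof.
rewrite (pair_fin _ _ 1); last by move=> k hk; rewrite unitv_out ?mulr0.
by rewrite /unitv sum_delta mul1r.
Qed.

Lemma pair_e1n g m : (1 <= m)%N ->
  pairing R g (fun k => unitv R 0 k + unitv R m k) = g 0%N + g m.
Proof.
move=> hm; rewrite (pair_fin _ _ m.+1); last first.
  by move=> k hk; rewrite !unitv_out ?addr0 ?mulr0 //; exact: leq_trans hk.
by rewrite /unitv (eq_bigr _ (fun k _ => mulrDr _ _ _)) big_split /= !sum_delta ltnS leqnn !mul1r.
Qed.

Lemma pair_e1nN g m : (1 <= m)%N ->
  pairing R g (fun k => - (unitv R 0 k + unitv R m k)) = - (g 0%N + g m).
Proof.
move=> hm; rewrite (pair_fin _ _ m.+1); last first.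
  by move=> k hk; rewrite !unitv_out ?addr0 ?oppr0 ?mulr0 //; exact: leq_trans hk.
rewrite (eq_bigr _ (fun k _ => mulrN _ _)) sumrN; congr (- _).
by rewrite /unitv (eq_bigr _ (fun k _ => mulrDr _ _ _)) big_split /= !sum_delta ltnS leqnn !mul1r.
Qed.

Lemma pair_f1 x : pairing R (unitv R 0) x = x 0%N.
Proof.
rewrite (pair_fin _ _ 1); last by move=> k hk; rewrite unitv_out ?mul0r.
by rewrite /unitv (eq_bigr _ (fun k _ => mulrC _ _)) sum_delta mul1r.
Qed.

Lemma pair_f2 x n : (1 <= n)%N ->
  pairing R (fun k => unitv R 0 k - 2 * unitv R n k) x = x 0%N - 2 * x n.
Proof.
move=> hn; rewrite (pair_fin _ _ n.+1); last first.
  by move=> k hk; rewrite !unitv_out ?mulr0 ?subr0 ?mul0r //; exact: leq_trans hk.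
rewrite (eq_bigr (fun k => x k * (k == 0)%:R - (2 * x k) * (k == n)%:R)); last first.
  by move=> k _; rewrite /unitv; ring.
rewrite big_split /= sumrN !sum_delta ltnS leqnn !mul1r //.
Qed.

Lemma cvx_top (t a b c : R) : 0 < t < 1 -> a <= c -> b <= c ->
  c = t * a + (1 - t) * b -> a = c /\ b = c.
Proof.
move=> /andP[t0 t1] ha hb e.
have h1 : 0 <= t * (c - a) by apply: mulr_ge0; lra.
have h2 : 0 <= (1 - t) * (c - b) by apply: mulr_ge0; lra.
have h3 : t * (c - a) + (1 - t) * (c - b) = 0 by rewrite e; ring.
have h4 : t * (c - a) = 0 by lra.
have h5 : (1 - t) * (c - b) = 0 by lra.
move/eqP: h4; rewrite mulf_eq0 (gt_eqF t0) /= subr_eq0 => /eqP h4.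
move/eqP: h5; rewrite mulf_eq0 !subr_eq0 (_ : (1 == t) = false) /=; last first.
  by rewrite eq_sym (lt_eqF t1).
by move=> /eqP h5; split.
Qed.

Lemma cvx_bot (t a b c : R) : 0 < t < 1 -> c <= a -> c <= b ->
  c = t * a + (1 - t) * b -> a = c /\ b = c.
Proof.
move=> ht ha hb e.
have [] := cvx_top t (- a) (- b) (- c) ht.
- by rewrite lerN2.
- by rewrite lerN2.
- by rewrite e; ring.
by move=> /oppr_inj -> /oppr_inj ->.
Qed.

Lemma abs_le (a c : R) : `|a| <= c -> - c <= a /\ a <= c.
Proof. by rewrite ler_norml => /andP[]. Qed.

Lemma BY_e1 : BY R (unitv R 0).
Proof.
have hl : l2 R (unitv R 0) by apply: (l2_fin _ 1) => k hk; rewrite unitv_out.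
apply: BY_mem => //.
  left; split => //; rewrite /l2norm (fin_series _ 1 _).2; last first.
    by move=> k hk; rewrite unitv_out // expr0n.
  by rewrite /series /= big_nat1 /unitv eqxx expr1n sqrtr1.
move=> n hn; rewrite (unitv_out hn) /unitv eqxx mulr0 subr0 normr1 //.
Qed.

Lemma BY_e1n m : (1 <= m)%N -> BY R (fun k => unitv R 0 k + unitv R m k).
Proof.
move=> hm; apply: BY_mem.
- apply: (l2_fin _ m.+1) => k hk; rewrite !unitv_out ?addr0 //; exact: leq_trans hk.
- by right; exists m; split => //; left.
move=> n hn; rewrite /unitv eqxx (gtn_eqF hn) (ltn_eqF hm) /= addr0 add0r.
case: (n == m) => /=; rewrite ?mulr1 ?mulr0 ?subr0 ?normr1 //.
by rewrite (_ : 1 - 2 = -1 :> R) ?normrN ?normr1 //; lra.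
Qed.

Lemma BY_e1nN m : (1 <= m)%N -> BY R (fun k => - (unitv R 0 k + unitv R m k)).
Proof.
move=> hm; apply: BY_mem.
- apply: (l2_fin _ m.+1) => k hk; rewrite !unitv_out ?addr0 ?oppr0 //; exact: leq_trans hk.
- by right; exists m; split => //; right.
move=> n hn; rewrite /unitv eqxx (gtn_eqF hn) (ltn_eqF hm) /= addr0 add0r.
case: (n == m) => /=; rewrite ?mulr1 ?mulr0 ?oppr0 ?subr0 ?normrN ?normr1 //.
- by rewrite (_ : -1 - 2 * -1 = 1 :> R) ?normr1 //; lra.
- by rewrite mulr0 subr0 normrN normr1.
Qed.

Arguments BY_coord {x}.
Arguments pair_le1 {g x}.
Arguments BY_e1n {m}.
Arguments BY_e1nN {m}.
Arguments cvx_top {t a b c}.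
Arguments cvx_bot {t a b c}.
Arguments abs_le {a c}.

Lemma coordE {x y z : nat -> R} {t : R} :
  x = (fun k => t * y k + (1 - t) * z k) -> forall k, x k = t * y k + (1 - t) * z k.
Proof. by move=> -> k. Qed.

Lemma part1 : extreme R (BY R) (unitv R 0).
Proof.
split; first exact: BY_e1.
move=> y z t hy hz ht H; have E := coordE H.
have [cy /abs_le [_ y0]] := BY_coord hy; have [cz /abs_le [_ z0]] := BY_coord hz.
have [ey ez] : y 0%N = 1 /\ z 0%N = 1.
  by apply: cvx_top ht y0 z0 _; rewrite -E /unitv eqxx.
apply/funext => k; case: (posnP k) => [->|hk]; first by rewrite ey ez.
have [h1 h1'] := abs_le (cy k hk); have [h2 h2'] := abs_le (cz k hk).
rewrite ey in h1 h1'; rewrite ez in h2 h2'.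
have [-> ->] // : y k = 0 /\ z k = 0.
apply: cvx_bot ht _ _ _; [lra | lra | by rewrite -E unitv_out].
Qed.

Lemma part2 n : (1 <= n)%N -> extreme R (BY R) (fun k => unitv R 0 k + unitv R n k).
Proof.
move=> hn; split; first exact: BY_e1n.
move=> y z t hy hz ht H; have E := coordE H.
have [cy /abs_le [_ y0]] := BY_coord hy; have [cz /abs_le [_ z0]] := BY_coord hz.
have [ey ez] : y 0%N = 1 /\ z 0%N = 1.
  apply: cvx_top ht y0 z0 _; rewrite -E /unitv eqxx (ltn_eqF hn) /=; lra.
apply/funext => k; case: (posnP k) => [->|hk]; first by rewrite ey ez.
have [h1 h1'] := abs_le (cy k hk); have [h2 h2'] := abs_le (cz k hk).
rewrite ey in h1 h1'; rewrite ez in h2 h2'.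
have := E k; rewrite /unitv (gtn_eqF hk) /= add0r.
case: (k == n) => /= Ek.
  have [-> ->] // : y k = 1 /\ z k = 1.
  by apply: cvx_top ht _ _ _; [lra | lra | exact: Ek].
have [-> ->] // : y k = 0 /\ z k = 0.
by apply: cvx_bot ht _ _ _; [lra | lra | exact: Ek].
Qed.

Lemma part3 : extreme R (BYs R) (unitv R 0).
Proof.
split.
  split; first by apply: (l2_fin _ 1) => k hk; rewrite unitv_out.
  apply: ge_sup; first by exists `|pairing R (unitv R 0) (unitv R 0)|; exists (unitv R 0) => //; exact: BY_e1.
  by move=> _ [x hx <-]; rewrite pair_f1; exact: (BY_coord hx).2.
move=> g h t hg hh ht H; have E := coordE H.
have /abs_le [_ g0] := pair_le1 hg BY_e1; have /abs_le [_ h0] := pair_le1 hh BY_e1.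
rewrite pair_e1 in g0; rewrite pair_e1 in h0.
have [eg eh] : g 0%N = 1 /\ h 0%N = 1.
  by apply: cvx_top ht g0 h0 _; rewrite -E /unitv eqxx.
apply/funext => k; case: (posnP k) => [->|hk]; first by rewrite eg eh.
have /abs_le [_ g1] := pair_le1 hg (BY_e1n hk).
have /abs_le [_ h1] := pair_le1 hh (BY_e1n hk).
rewrite pair_e1n // eg in g1; rewrite pair_e1n // eh in h1.
have [-> ->] // : g k = 0 /\ h k = 0.
apply: cvx_top ht _ _ _; [lra | lra | by rewrite -E unitv_out].
Qed.

Lemma part4 n : (1 <= n)%N ->
  extreme R (BYs R) (fun k => unitv R 0 k - 2 * unitv R n k).
Proof.
move=> hn; split.
  split.
    apply: (l2_fin _ n.+1) => k hk.
    by rewrite !unitv_out ?mulr0 ?subr0 //; exact: leq_trans hk.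
  apply: ge_sup; first by exists `|pairing R (fun k => unitv R 0 k - 2 * unitv R n k) (unitv R 0)|; exists (unitv R 0) => //; exact: BY_e1.
  by move=> _ [x hx <-]; rewrite pair_f2 //; exact: (BY_coord hx).1.
move=> g h t hg hh ht H; have E := coordE H.
have /abs_le [_ g0] := pair_le1 hg BY_e1; have /abs_le [_ h0] := pair_le1 hh BY_e1.
rewrite pair_e1 in g0; rewrite pair_e1 in h0.
have [eg eh] : g 0%N = 1 /\ h 0%N = 1.
  apply: cvx_top ht g0 h0 _; rewrite -E /unitv eqxx (ltn_eqF hn) /=; lra.
apply/funext => k; case: (posnP k) => [->|hk]; first by rewrite eg eh.
have := E k; rewrite /unitv (gtn_eqF hk) /= add0r.
case: (eqVneq k n) => [ekn|nkn] /= Ek.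
  subst k.
  have /abs_le [_ g1] := pair_le1 hg (BY_e1nN hk).
  have /abs_le [_ h1] := pair_le1 hh (BY_e1nN hk).
  rewrite pair_e1nN // eg in g1; rewrite pair_e1nN // eh in h1.
  have [-> ->] // : g n = -2 /\ h n = -2.
  by apply: cvx_bot ht _ _ _; [lra | lra | rewrite -Ek; ring].
have /abs_le [_ g1] := pair_le1 hg (BY_e1n hk).
have /abs_le [_ h1] := pair_le1 hh (BY_e1n hk).
rewrite pair_e1n // eg in g1; rewrite pair_e1n // eh in h1.
have [-> ->] // : g k = 0 /\ h k = 0.
by apply: cvx_top ht _ _ _; [lra | lra | rewrite -Ek; ring].
Qed.

End S.
End Aux.

Theorem proposition3p5 (R : realType) :
  extreme R (BY R) (unitv R 0) /\
  (forall n : nat, (1 <= n)%N ->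
     extreme R (BY R) (fun k => unitv R 0 k + unitv R n k)) /\
  extreme R (BYs R) (unitv R 0) /\
  (forall n : nat, (1 <= n)%N ->
     extreme R (BYs R) (fun k => unitv R 0 k - 2 * unitv R n k)).
Proof.
split; first exact: Aux.part1.
split; first exact: Aux.part2.
split; first exact: Aux.part3.
exact: Aux.part4.
Qed.
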